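(* Let $h$ be a strictly concave reduced function such that $h(\rho\otimes\sigma)\ge h(\rho)$ and $h(\rho\otimes\sigma)\ge h(\sigma)$ for all states $\rho,\sigma$. Let $E_{g'}^{(3)}$ and $E_{g'}^{(2)}$ be defined on pure states by $E_{g'}^{(m)}(|\psi\rangle^{A_1\cdots A_m})=\max_i h(\rho^{A_i})$ if $h(\rho^{A_i})>0$ for all $i$ and $=0$ otherwise, extended to mixed states by the convex roof. Consider tripartite pure states of the form $$|\eta\rangle^{ABC}=|\eta_1\rangle^{AB_1}\otimes|\eta_2\rangle^{B_2C},$$ where, up to a local unitary on $B$, $\mathcal H^B$ contains a subspace isomorphic to $\mathcal H^{B_1}\otimes\mathcal H^{B_2}$. Then $E_{g'}^{(3)}$ is tightly complete monogamous on such states: for every genuinely entangled state $|\eta\rangle^{ABC}$ of this form and every pair of partitions $X\succ^bY$ of $ABC$ with $E_{g'}^{(k)}(X)=E_{g'}^{(l)}(Y)$ at $|\eta\rangle$, one has $E_{g'}^{( * )}(\Gamma)=0$ for all $\Gamma\in\Xi(X-Y)$.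
   Context: All Hilbert spaces are finite-dimensional; $\rho^X$ is the reduced state on a set $X$ of parties. Reduced function: a function $h$ from density matrices (of any finite dimension) to $[0,\infty)$ that is concave, depends only on the multiset of nonzero eigenvalues of its argument, and satisfies $h(\rho)=0$ iff $\rho$ is pure. Strictly concave: $h(\lambda\rho_1+(1-\lambda)\rho_2)>\lambda h(\rho_1)+(1-\lambda)h(\rho_2)$ for $\rho_1\ne\rho_2$, $0<\lambda<1$. Convex roof: $E(\rho)=\min\sum_jp_jE(|\psi_j\rangle)$ over pure-state decompositions of $\rho$. A pure state is biseparable if it is a product $|\psi\rangle^X\otimes|\psi\rangle^Y$ for some bipartition $X|Y$ of the parties; otherwise (for pure states) it is genuinely entangled. Partitions: $X_1|\cdots|X_k$ with pairwise disjoint nonempty sets of parties, each regarded as one party; $E^{(k)}(X_1|\cdots|X_k)$ is $E^{(k)}$ evaluated on $\rho^{X_1\cdots X_k}$. $X\succ^bY$ means $Y$ is obtained from $X$ by merging some of the $X_j$ into one party; $X\succ Y$ means $Y$ is obtained from $X$ by one or several of: discarding some $X_j$, merging some $X_j$'s, discarding parties inside some $X_t$ with $\ge2$ parties. $\Xi(X-Y)$ (for $X\succ Y$): the set of partitions coarser than $X$ that (i) are neither coarser than $Y$ nor ones from which $Y$ can be obtained by coarsening, and (ii) either contain no subsystem of $Y$, or contain some $Y_j$'s (merged into one party) together with other subsystems of $X$ not in $Y$; (iii) if $Y_1|\cdots|Y_l=X_1|\cdots|X_{l-1}|X_l\cdots X_k$, $\Xi$ consists only of $X_l|\cdots|X_k$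 and partitions coarser than it. For tripartite systems: $\Xi(A|B|C-A|BC)=\{B|C\}$, $\Xi(A|B|C-B|AC)=\{A|C\}$, $\Xi(A|B|C-C|AB)=\{A|B\}$. *)

(* Defs.v *)
From HB Require Import structures.
From mathcomp Require Import all_boot all_order all_algebra.
From mathcomp Require Import complex mxtens.
From mathcomp Require Import boolp classical_sets reals.
Set Implicit Arguments.
Unset Strict Implicit.
Unset Printing Implicit Defensive.
Import Order.TTheory GRing.Theory Num.Theory.
Local Open Scope ring_scope.
Local Open Scope complex_scope.

Section QInfo.
Variable R : realType.
Local Notation C := (R[i]).

Definition adjmx m n (A : 'M[C]_(m, n)) : 'M[C]_(n, m) := (map_mx (@conjc R) A)^T.

Definition psd n (A : 'M[C]_n) : Prop :=
  forall v : 'cV[C]_n, 0 <= (adjmx v *m A *m v) 0 0.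

Definition density n (A : 'M[C]_n) : Prop := psd A /\ \tr A = 1.

Definition unitvec n (v : 'cV[C]_n) : Prop := adjmx v *m v = 1%:M.

Definition proj n (v : 'cV[C]_n) : 'M[C]_n := v *m adjmx v.

Definition pure n (A : 'M[C]_n) : Prop := exists v : 'cV[C]_n, unitvec v /\ A = proj v.

Definition ptr2 m n (A : 'M[C]_(m * n)) : 'M[C]_m :=
  \matrix_(i, i') \sum_(j < n) A (mxtens_index (i, j)) (mxtens_index (i', j)).
Definition ptr1 m n (A : 'M[C]_(m * n)) : 'M[C]_n :=
  \matrix_(j, j') \sum_(i < m) A (mxtens_index (i, j)) (mxtens_index (i, j')).

(* same multiset of nonzero eigenvalues (roots of the characteristic
   polynomial with multiplicity) *)
Definition same_nonzero_spectrum m n (A : 'M[C]_m) (B : 'M[C]_n) : Prop :=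
  forall x : C, x != 0 -> mup x (char_poly A) = mup x (char_poly B).

Definition dfun := forall n, 'M[C]_n -> R.

Definition concave_on_states (h : dfun) : Prop :=
  forall n (r1 r2 : 'M[C]_n) (l : R), density r1 -> density r2 ->
    0 <= l <= 1 ->
    l * h n r1 + (1 - l) * h n r2 <= h n (l%:C *: r1 + (1 - l)%:C *: r2).

Definition strictly_concave_on_states (h : dfun) : Prop :=
  forall n (r1 r2 : 'M[C]_n) (l : R), density r1 -> density r2 ->
    r1 != r2 -> 0 < l < 1 ->
    l * h n r1 + (1 - l) * h n r2 < h n (l%:C *: r1 + (1 - l)%:C *: r2).

Definition reduced_function (h : dfun) : Prop :=
  [/\ (forall n (r : 'M[C]_n), density r -> 0 <= h n r),
      concave_on_states h,
      (forall m n (r : 'M[C]_m) (s : 'M[C]_n), density r -> density s ->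
          same_nonzero_spectrum r s -> h m r = h n s)
    & (forall n (r : 'M[C]_n), density r -> (h n r = 0 <-> pure r))].

Definition tensor_monotone (h : dfun) : Prop :=
  forall m n (r : 'M[C]_m) (s : 'M[C]_n), density r -> density s ->
    h m r <= h (m * n)%N (r *t s) /\ h n s <= h (m * n)%N (r *t s).

Definition Eg2_pure (h : dfun) m n (psi : 'cV[C]_(m * n)) : R :=
  let a := h m (ptr2 (proj psi)) in
  let b := h n (ptr1 (proj psi)) in
  if (0 < a) && (0 < b) then Num.max a b else 0.

(* convex roof extension (the minimum is attained, so it equals the infimum) *)
Definition Eg2 (h : dfun) m n (rho : 'M[C]_(m * n)) : R :=
  inf [set s : R | exists k (p : 'I_k -> R) (psi : 'I_k -> 'cV[C]_(m * n)),
        (forall j, 0 <= p j) /\ (forall j, unitvec (psi j)) /\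
        rho = \sum_(j < k) (p j)%:C *: proj (psi j) /\
        s = \sum_(j < k) p j * Eg2_pure h (psi j)].

Definition idx3 dA dB dC (a : 'I_dA) (b : 'I_dB) (c : 'I_dC) : 'I_(dA * dB * dC) :=
  mxtens_index (mxtens_index (a, b), c).

Definition cut_A_BC dA dB dC (eta : 'cV[C]_(dA * dB * dC)) : 'cV[C]_(dA * (dB * dC)) :=
  \col_k (let: (a, bc) := mxtens_unindex k in
          let: (b, c) := mxtens_unindex bc in eta (idx3 a b c) 0).
Definition cut_B_AC dA dB dC (eta : 'cV[C]_(dA * dB * dC)) : 'cV[C]_(dB * (dA * dC)) :=
  \col_k (let: (b, ac) := mxtens_unindex k in
          let: (a, c) := mxtens_unindex ac in eta (idx3 a b c) 0).
Definition cut_C_AB dA dB dC (eta : 'cV[C]_(dA * dB * dC)) : 'cV[C]_(dC * (dA * dB)) :=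
  \col_k (let: (c, ab) := mxtens_unindex k in
          let: (a, b) := mxtens_unindex ab in eta (idx3 a b c) 0).

Definition rhoA dA dB dC (eta : 'cV[C]_(dA * dB * dC)) := ptr2 (proj (cut_A_BC eta)).
Definition rhoB dA dB dC (eta : 'cV[C]_(dA * dB * dC)) := ptr2 (proj (cut_B_AC eta)).
Definition rhoC dA dB dC (eta : 'cV[C]_(dA * dB * dC)) := ptr2 (proj (cut_C_AB eta)).
Definition rhoBC dA dB dC (eta : 'cV[C]_(dA * dB * dC)) := ptr1 (proj (cut_A_BC eta)).
Definition rhoAC dA dB dC (eta : 'cV[C]_(dA * dB * dC)) := ptr1 (proj (cut_B_AC eta)).
Definition rhoAB dA dB dC (eta : 'cV[C]_(dA * dB * dC)) := ptr1 (proj (cut_C_AB eta)).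

Definition Eg3_pure (h : dfun) dA dB dC (eta : 'cV[C]_(dA * dB * dC)) : R :=
  let a := h dA (rhoA eta) in
  let b := h dB (rhoB eta) in
  let c := h dC (rhoC eta) in
  if [&& 0 < a, 0 < b & 0 < c] then Num.max a (Num.max b c) else 0.

Definition biseparable dA dB dC (eta : 'cV[C]_(dA * dB * dC)) : Prop :=
  (exists (x : 'cV[C]_dA) (y : 'cV[C]_(dB * dC)), cut_A_BC eta = x *t y) \/
  (exists (x : 'cV[C]_dB) (y : 'cV[C]_(dA * dC)), cut_B_AC eta = x *t y) \/
  (exists (x : 'cV[C]_dC) (y : 'cV[C]_(dA * dB)), cut_C_AB eta = x *t y).

Definition genuinely_entangled dA dB dC (eta : 'cV[C]_(dA * dB * dC)) : Prop :=
  unitvec eta /\ ~ biseparable eta.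

(* |eta>^{ABC} = (1_A (x) V (x) 1_C)(|eta1>^{AB1} (x) |eta2>^{B2C}), with
   V : H^{B1} (x) H^{B2} -> H^B an isometry (embedding of H^{B1}(x)H^{B2}
   as a subspace of H^B, up to a local unitary on B) *)
Definition eta_form dA dB dC (eta : 'cV[C]_(dA * dB * dC)) : Prop :=
  exists (dB1 dB2 : nat) (eta1 : 'cV[C]_(dA * dB1)) (eta2 : 'cV[C]_(dB2 * dC))
         (V : 'M[C]_(dB, dB1 * dB2)),
    [/\ unitvec eta1, unitvec eta2, adjmx V *m V = 1%:M &
      forall a b c, eta (idx3 a b c) 0 =
        \sum_(b1 < dB1) \sum_(b2 < dB2)
           V b (mxtens_index (b1, b2)) *
           eta1 (mxtens_index (a, b1)) 0 * eta2 (mxtens_index (b2, c)) 0].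

End QInfo.

(* Main.v *)
Set Warnings "-notation-overridden,-ambiguous-paths".
Require Import Defs.
From HB Require Import structures.
From mathcomp Require Import all_boot all_order all_algebra.
From mathcomp Require Import complex mxtens.
From mathcomp Require Import boolp classical_sets reals.
From mathcomp Require Import ring lra.
Import Order.TTheory GRing.Theory Num.Theory.
Set Implicit Arguments. Unset Strict Implicit. Unset Printing Implicit Defensive.
Local Open Scope ring_scope.

Section AB.
Variable F : comNzRingType.

Lemma charpoly_AB m n (A : 'M[F]_(m, n)) (B : 'M[F]_(n, m)) :
  'X^n * char_poly (A *m B) = 'X^m * char_poly (B *m A).
Proof.
pose A' := map_mx (@polyC F) A; pose B' := map_mx (@polyC F) B.
pose M1 := block_mx (1%:M : 'M_m) (- A') 0 ('X%:M : 'M_n).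
pose M2 := block_mx ('X%:M : 'M_m) A' B' (1%:M : 'M_n).
have e1 : M1 *m M2 = block_mx ('X%:M - A' *m B') 0 ('X%:M *m B') 'X%:M.
  by rewrite mulmx_block !mul1mx !mul0mx !add0r !mulmx1 !mulNmx addrN.
have e2 : M2 *m M1 = block_mx 'X%:M 0 B' ('X%:M - B' *m A').
  rewrite mulmx_block !mulmx1 !mulmx0 !addr0 mul1mx !mulmxN.
  by rewrite scalar_mxC addNr addrC.
have := congr1 determinant e1; have := congr1 determinant e2.
rewrite !det_mulmx det_lblock det_ublock det_lblock !det_scalar ?det1 expr1n !mul1r.
rewrite /char_poly /char_poly_mx !map_mxM -/A' -/B' => H2 H1.
by rewrite mulrC -H1 mulrC H2.
Qed.
End AB.

Section Q.
Variable R : realType.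
Local Notation C := (R[i]).
Local Open Scope complex_scope.
Local Open Scope ring_scope.

Definition G m n (M : 'M[C]_(m, n)) : 'M[C]_m := M *m adjmx M.

Lemma spec_AB m n (A : 'M[C]_(m,n)) (B : 'M[C]_(n,m)) :
  same_nonzero_spectrum (A *m B) (B *m A).
Proof.
move=> x x0; have e := charpoly_AB A B.
have nr k : ~~ root ('X^k) x by rewrite /root hornerXn expf_neq0.
by rewrite -(mupMr _ (nr n)) e mupMr.
Qed.

Lemma spec_sym m n (A : 'M[C]_m) (B : 'M[C]_n) :
  same_nonzero_spectrum A B -> same_nonzero_spectrum B A.
Proof. by move=> H x x0; rewrite H. Qed.

Lemma spec_trans m n p (A : 'M[C]_m) (B : 'M[C]_n) (D : 'M[C]_p) :
  same_nonzero_spectrum A B -> same_nonzero_spectrum B D ->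
  same_nonzero_spectrum A D.
Proof. by move=> H1 H2 x x0; rewrite H1 // H2. Qed.

Lemma spec_tr n (A : 'M[C]_n) : same_nonzero_spectrum A^T A.
Proof.
move=> x _; rewrite /char_poly -[X in _ = mup _ X]det_tr; do 2 f_equal.
by rewrite /char_poly_mx linearB/= tr_scalar_mx map_trmx.
Qed.

Lemma adjmxK m n (A : 'M[C]_(m, n)) : adjmx (adjmx A) = A.
Proof. by apply/matrixP=> i j; rewrite !mxE conjcK. Qed.

Lemma adjmx_mul m n p (A : 'M[C]_(m, n)) (B : 'M[C]_(n, p)) :
  adjmx (A *m B) = adjmx B *m adjmx A.
Proof. by rewrite /adjmx map_mxM trmx_mul. Qed.

Lemma adjmxD m n (A B : 'M[C]_(m, n)) : adjmx (A + B) = adjmx A + adjmx B.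
Proof. by apply/matrixP=> i j; rewrite !mxE rmorphD. Qed.

Lemma adjmxN m n (A : 'M[C]_(m, n)) : adjmx (- A) = - adjmx A.
Proof. by apply/matrixP=> i j; rewrite !mxE rmorphN. Qed.

Lemma adjmxZ m n (a : C) (A : 'M[C]_(m, n)) : adjmx (a *: A) = (conjc a) *: adjmx A.
Proof. by apply/matrixP=> i j; rewrite !mxE rmorphM. Qed.

Lemma adjmx_scalar n (a : C) : adjmx (a%:M : 'M_n) = (conjc a)%:M.
Proof. by apply/matrixP=> i j; rewrite !mxE rmorphMn eq_sym. Qed.

Lemma adjmx_tens m n p q (A : 'M[C]_(m, n)) (B : 'M[C]_(p, q)) :
  adjmx (A *t B) = adjmx A *t adjmx B.
Proof. by apply/matrixP=> i j; rewrite !mxE rmorphM. Qed.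

Lemma adjmx_tr m n (A : 'M[C]_(m, n)) : adjmx A^T = map_mx (@conjc R) A.
Proof. by apply/matrixP=> i j; rewrite !mxE. Qed.

Lemma G_E m n (M : 'M[C]_(m, n)) i j : G M i j = \sum_k M i k * conjc (M j k).
Proof. by rewrite !mxE; apply: eq_bigr => k _; rewrite !mxE. Qed.

Lemma trG m n (M : 'M[C]_(m, n)) :
  \tr (G M) = \sum_i \sum_k M i k * conjc (M i k).
Proof. by rewrite /mxtrace; apply: eq_bigr => i _; rewrite G_E. Qed.

Lemma trG_ge0 m n (M : 'M[C]_(m, n)) : 0 <= \tr (G M).
Proof. by rewrite trG; do 2!(apply: sumr_ge0 => ? _); apply: mulcJ_ge0. Qed.

Lemma trG_eq0 m n (M : 'M[C]_(m, n)) : \tr (G M) = 0 -> M = 0.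
Proof.
rewrite trG => H; apply/matrixP => i j; rewrite mxE.
have g1 : forall i, true -> 0 <= \sum_k M i k * conjc (M i k).
  by move=> i' _; apply: sumr_ge0 => k _; exact: mulcJ_ge0.
have H1 := psumr_eq0P g1 H.
have g2 : forall k, true -> 0 <= M i k * conjc (M i k) by move=> k' _; exact: mulcJ_ge0.
have := @psumr_eq0P _ _ _ _ g2 (H1 i isT) j isT.
move/eqP; rewrite mulf_eq0 conjc_eq0 orbb => /eqP; apply.
Qed.

Lemma trG_tr m n (M : 'M[C]_(m, n)) : \tr (G M^T) = \tr (G M).
Proof. by rewrite !trG exchange_big; do 2!(apply: eq_bigr => ? _); rewrite !mxE. Qed.

Lemma psd_G m n (M : 'M[C]_(m, n)) : psd (G M).
Proof.
move=> v; have e : adjmx M *m v = adjmx (adjmx v *m M) by rewrite adjmx_mul adjmxK.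
rewrite /G !mulmxA -mulmxA e.
rewrite -/(G _) G_E; apply: sumr_ge0 => k _; exact: mulcJ_ge0.
Qed.

Lemma spec_G m n (M : 'M[C]_(m, n)) : same_nonzero_spectrum (G M) (G M^T).
Proof.
apply: spec_trans (spec_sym (spec_tr _)) _.
rewrite /G trmx_mul /adjmx trmxK.
have -> : (map_mx (@conjc R) M^T)^T = map_mx (@conjc R) M by rewrite map_trmx trmxK.
exact: spec_AB.
Qed.


Lemma sum_tens m n (F : 'I_(m * n) -> C) :
  \sum_k F k = \sum_i \sum_j F (mxtens_index (i, j)).
Proof.
rewrite pair_big (reindex (@mxtens_index m n)) /=.
  by apply: eq_bigr => -[i j] _.
by exists (@mxtens_unindex m n) => k _; rewrite (mxtens_indexK, mxtens_unindexK).
Qed.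

Definition matv m n (v : 'cV[C]_(m * n)) : 'M[C]_(m, n) :=
  \matrix_(i, j) v (mxtens_index (i, j)) 0.

Lemma proj_E n (v : 'cV[C]_n) i j : proj v i j = v i 0 * conjc (v j 0).
Proof. by rewrite !mxE big_ord1 !mxE. Qed.

Lemma ptr2_proj m n (v : 'cV[C]_(m * n)) : ptr2 (proj v) = G (matv v).
Proof.
by apply/matrixP => i j; rewrite G_E mxE; apply: eq_bigr => k _; rewrite proj_E !mxE.
Qed.

Lemma ptr1_proj m n (v : 'cV[C]_(m * n)) : ptr1 (proj v) = G (matv v)^T.
Proof.
by apply/matrixP => i j; rewrite G_E mxE; apply: eq_bigr => k _; rewrite proj_E !mxE.
Qed.

Lemma unitvec_tr n (v : 'cV[C]_n) : unitvec v <-> \tr (proj v) = 1.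
Proof.
have e : \tr (proj v) = (adjmx v *m v) 0 0.
  by rewrite /mxtrace mxE; apply: eq_bigr => i _; rewrite proj_E !mxE mulrC.
rewrite e; split => [-> | H]; first by rewrite mxE.
by apply/matrixP => i j; rewrite !ord1 H mxE.
Qed.

Lemma tr_matv m n (v : 'cV[C]_(m * n)) : \tr (G (matv v)) = \tr (proj v).
Proof.
rewrite trG /mxtrace sum_tens; apply: eq_bigr => i _; apply: eq_bigr => j _.
by rewrite proj_E !mxE.
Qed.

Lemma density_G m n (M : 'M[C]_(m, n)) : \tr (G M) = 1 -> density (G M).
Proof. by move=> H; split; [exact: psd_G | exact: H]. Qed.

Lemma tens_tr m n (A : 'M[C]_m) (B : 'M[C]_n) : \tr (A *t B) = \tr A * \tr B.
Proof. by rewrite /mxtrace mulr_sum; apply: eq_bigr => k _; rewrite mxE. Qed.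

Lemma ptr2_tens m n (A : 'M[C]_m) (B : 'M[C]_n) : ptr2 (A *t B) = \tr B *: A.
Proof.
apply/matrixP => i j; rewrite !mxE (mulrC (\tr B)) /mxtrace mulr_sumr; apply: eq_bigr => k _.
by rewrite tensmxE.
Qed.

Lemma ptr1_tens m n (A : 'M[C]_m) (B : 'M[C]_n) : ptr1 (A *t B) = \tr A *: B.
Proof.
apply/matrixP => i j; rewrite !mxE /mxtrace mulr_suml; apply: eq_bigr => k _.
by rewrite tensmxE.
Qed.

Lemma G_tens m n p q (A : 'M[C]_(m, n)) (B : 'M[C]_(p, q)) :
  G (A *t B) = G A *t G B.
Proof. by rewrite /G adjmx_tens tensmx_mul. Qed.

Lemma tensDr m n p q (A : 'M[C]_(m, n)) (B D : 'M[C]_(p, q)) :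
  A *t (B + D) = A *t B + A *t D.
Proof. by apply/matrixP => i j; rewrite !mxE mulrDr. Qed.

Lemma tensDl m n p q (A D : 'M[C]_(m, n)) (B : 'M[C]_(p, q)) :
  (A + D) *t B = A *t B + D *t B.
Proof. by apply/matrixP => i j; rewrite !mxE mulrDl. Qed.

Lemma tensZr m n p q (a : C) (A : 'M[C]_(m, n)) (B : 'M[C]_(p, q)) :
  A *t (a *: B) = a *: (A *t B).
Proof. by apply/matrixP => i j; rewrite !mxE mulrCA. Qed.

Lemma tensZl m n p q (a : C) (A : 'M[C]_(m, n)) (B : 'M[C]_(p, q)) :
  (a *: A) *t B = a *: (A *t B).
Proof. by apply/matrixP => i j; rewrite !mxE mulrA. Qed.

Lemma G_Z m n (a : C) (M : 'M[C]_(m, n)) : G (a *: M) = (a * conjc a) *: G M.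
Proof. by rewrite /G adjmxZ -scalemxAl -scalemxAr scalerA mulrC. Qed.
Unset Implicit Arguments.
Section H.
Variable h : dfun R.
Hypothesis Hred : reduced_function h.

Lemma h_spec m n (A : 'M[C]_m) (B : 'M[C]_n) : density A -> density B ->
  same_nonzero_spectrum A B -> h m A = h n B.
Proof. by case: Hred => _ _ H _; apply: H. Qed.

Lemma h_ge0 n (A : 'M[C]_n) : density A -> 0 <= h n A.
Proof. by case: Hred => H _ _ _; apply: H. Qed.

Lemma h_pure n (A : 'M[C]_n) : density A -> (h n A = 0 <-> pure A).
Proof. by case: Hred => _ _ _ H; apply: H. Qed.

Lemma hG m n (M : 'M[C]_(m, n)) : \tr (G M) = 1 -> h m (G M) = h n (G M^T).
Proof.
move=> H; apply: h_spec; [exact: density_G | apply: density_G; by rewrite trG_tr|].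
exact: spec_G.
Qed.

End H.
Set Implicit Arguments.

Lemma G_pure_prod m n (M : 'M[C]_(m, n)) (u : 'cV[C]_m) :
  unitvec u -> G M = proj u -> forall i j, M i j = u i 0 * (adjmx u *m M) 0 j.
Proof.
move=> Hu HG.
pose P := 1%:M - u *m adjmx u.
have Pu : P *m u = 0 by rewrite mulmxBl mul1mx -mulmxA Hu mulmx1 subrr.
have adjP : adjmx P = P.
  by rewrite adjmxD adjmxN adjmx_scalar conjc1 adjmx_mul adjmxK.
have eQ : M - u *m (adjmx u *m M) = P *m M by rewrite mulmxBl mul1mx mulmxA.
have : P *m M = 0.
  apply: trG_eq0.
  have -> : G (P *m M) = P *m G M *m P by rewrite /G adjmx_mul adjP !mulmxA.
  by rewrite HG /proj !mulmxA Pu !mul0mx mxtrace0.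
rewrite -eQ => /eqP; rewrite subr_eq0 => /eqP HM i j.
by rewrite {1}HM mxE big_ord1.
Qed.

Lemma real_of_ge0 (x : C) : 0 <= x -> x = (complex.Re x)%:C.
Proof. by move=> H; rewrite RRe_real // ger0_real. Qed.

Lemma G_scaleR m n (r : R) (M : 'M[C]_(m, n)) : G (r%:C *: M) = (r * r)%:C *: G M.
Proof. by rewrite G_Z conjc_real rmorphM. Qed.

Lemma pure_of_tr n (c : 'cV[C]_n) : \tr (G c) = 1 -> pure (G c).
Proof. by move=> H; exists c; split => //; apply/unitvec_tr. Qed.

Lemma G_decomp n l (N : 'M[C]_(n, l)) : \tr (G N) = 1 -> ~ pure (G N) ->
  exists (s : R) (c : 'cV[C]_n) (N2 : 'M[C]_(n, l)),
   [/\ 0 < s < 1, \tr (G c) = 1, \tr (G N2) = 1, G c != G N2 &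
       G N = s%:C *: G c + (1 - s)%:C *: G N2].
Proof.
move=> Htr Hnp.
have [j0 Hj0] : exists j, col j N != 0.
  case: (pselect (exists j, col j N != 0)) => // H.
  have N0 : N = 0.
    apply/matrixP => i j.
    have : col j N = 0 by apply/eqP; apply/negPn/negP => Hn; apply: H; exists j.
    move/matrixP/(_ i 0); by rewrite !mxE.
  by move: Htr; rewrite N0 /G mul0mx mxtrace0 => /eqP; rewrite eq_sym oner_eq0.
pose c := col j0 N.
pose N2 := \matrix_(i, j) if j == j0 then 0 else N i j.
have eqG : G N = G c + G N2.
  apply/matrixP => i i'; rewrite G_E [RHS]mxE !G_E (bigD1 j0) //= big_ord1 !mxE.
  congr (_ + _); rewrite [RHS](bigD1 j0) //= !mxE eqxx mul0r add0r.
  by apply: eq_bigr => j /negbTE Hj; rewrite !mxE Hj.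
have t1ge := trG_ge0 c; have t2ge := trG_ge0 N2.
have tsum : \tr (G c) + \tr (G N2) = 1 by rewrite -mxtraceD -eqG.
have t1n0 : \tr (G c) != 0.
  by apply/eqP => /trG_eq0 c0; move: Hj0; rewrite -/c c0 eqxx.
have t2n0 : \tr (G N2) != 0.
  apply/eqP => /trG_eq0 N20; apply: Hnp; rewrite eqG N20 /G mul0mx addr0.
  apply: pure_of_tr; move: tsum; rewrite N20 /G mul0mx mxtrace0 addr0 => <-.
  by [].
set s := complex.Re (\tr (G c)).
have e1 : \tr (G c) = s%:C by apply: real_of_ge0.
have e2 : \tr (G N2) = (1 - s)%:C.
  by rewrite rmorphB rmorph1 /= -e1 -tsum addrC addKr.
have s0 : 0 < s.
  by rewrite -ltcR -e1 lt_def t1n0 t1ge.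
have s1 : 0 < 1 - s.
  by rewrite -ltcR -e2 lt_def t2n0 t2ge.
pose c' := ((Num.sqrt s)^-1)%:C *: c.
pose N2' := ((Num.sqrt (1 - s))^-1)%:C *: N2.
have sq x : 0 < x -> (Num.sqrt x)^-1 * (Num.sqrt x)^-1 = x^-1.
  by move=> x0; rewrite -invfM -expr2 sqr_sqrtr // ltW.
have Gc' : G c' = (s^-1)%:C *: G c by rewrite G_scaleR sq.
have GN2' : G N2' = ((1 - s)^-1)%:C *: G N2 by rewrite G_scaleR sq.
have tc' : \tr (G c') = 1.
  by rewrite Gc' mxtraceZ e1 -rmorphM mulVf ?gt_eqF.
have tN2' : \tr (G N2') = 1.
  by rewrite GN2' mxtraceZ e2 -rmorphM mulVf ?gt_eqF.
have eqG' : G N = s%:C *: G c' + (1 - s)%:C *: G N2'.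
  by rewrite Gc' GN2' !scalerA -!rmorphM !divff ?gt_eqF // !scale1r.
exists s, c', N2'; split => //; first by rewrite s0 -subr_gt0.
apply/negP => /eqP E; apply: Hnp; rewrite eqG' -E -scalerDl -rmorphD addrC subrK.
by rewrite scale1r; apply: pure_of_tr.
Qed.


Unset Implicit Arguments.
Section H2.
Variable h : dfun R.
Hypothesis Hred : reduced_function h.
Hypothesis Hsc : strictly_concave_on_states h.
Hypothesis Htm : tensor_monotone h.

Lemma strict_right m k n l (M : 'M[C]_(m, k)) (N : 'M[C]_(n, l)) :
  \tr (G M) = 1 -> \tr (G N) = 1 -> ~ pure (G N) ->
  h m (G M) < h (m * n)%N (G M *t G N).
Proof.
move=> HM HN Hnp.
have [s [c [N2 [/andP[s0 s1] Hc HN2 Hneq EG]]]] := G_decomp HN Hnp.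
have D1 : density (G M *t G c).
  by rewrite -G_tens; apply: density_G; rewrite G_tens tens_tr HM Hc mulr1.
have D2 : density (G M *t G N2).
  by rewrite -G_tens; apply: density_G; rewrite G_tens tens_tr HM HN2 mulr1.
have Hne : G M *t G c != G M *t G N2.
  apply: contra Hneq => /eqP E; apply/eqP.
  by have := congr1 (@ptr1 R _ _) E; rewrite !ptr1_tens HM !scale1r.
have s01 : 0 < s < 1 by rewrite s0 s1.
have := Hsc _ _ _ s D1 D2 Hne s01.
rewrite -!tensZr -tensDr -EG.
have [m1 _] := Htm _ _ _ _ (density_G HM) (density_G Hc).
have [m2 _] := Htm _ _ _ _ (density_G HM) (density_G HN2).
have := ler_wpM2l (ltW s0) m1.
have s1' : 0 <= 1 - s by rewrite subr_ge0 ltW.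
have := ler_wpM2l s1' m2.
lra.
Qed.

Lemma strict_left m k n l (M : 'M[C]_(m, k)) (N : 'M[C]_(n, l)) :
  \tr (G M) = 1 -> \tr (G N) = 1 -> ~ pure (G M) ->
  h n (G N) < h (m * n)%N (G M *t G N).
Proof.
move=> HM HN Hnp.
have [s [c [M2 [/andP[s0 s1] Hc HM2 Hneq EG]]]] := G_decomp HM Hnp.
have D1 : density (G c *t G N).
  by rewrite -G_tens; apply: density_G; rewrite G_tens tens_tr HN Hc mulr1.
have D2 : density (G M2 *t G N).
  by rewrite -G_tens; apply: density_G; rewrite G_tens tens_tr HN HM2 mulr1.
have Hne : G c *t G N != G M2 *t G N.
  apply: contra Hneq => /eqP E; apply/eqP.
  by have := congr1 (@ptr2 R _ _) E; rewrite !ptr2_tens HN !scale1r.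
have s01 : 0 < s < 1 by rewrite s0 s1.
have := Hsc _ _ _ s D1 D2 Hne s01.
rewrite -!tensZl -tensDl -EG.
have [_ m1] := Htm _ _ _ _ (density_G Hc) (density_G HN).
have [_ m2] := Htm _ _ _ _ (density_G HM2) (density_G HN).
have := ler_wpM2l (ltW s0) m1.
have s1' : 0 <= 1 - s by rewrite subr_ge0 ltW.
have := ler_wpM2l s1' m2.
lra.
Qed.

Lemma h_iso p q (V : 'M[C]_(p, q)) (Z : 'M[C]_q) : adjmx V *m V = 1%:M ->
  density Z -> density (V *m Z *m adjmx V) -> h p (V *m Z *m adjmx V) = h q Z.
Proof.
move=> HV DZ DV; apply: h_spec => //.
have := spec_AB V (Z *m adjmx V).
by rewrite -mulmxA HV mulmx1 mulmxA.
Qed.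

End H2.
Set Implicit Arguments.

Lemma G_sum_col m n (M : 'M[C]_(m, n)) : G M = \sum_j proj (col j M).
Proof.
apply/matrixP => i i'; rewrite G_E summxE; apply: eq_bigr => j _.
by rewrite proj_E !mxE.
Qed.

Definition vt m n (x : 'cV[C]_m) (y : 'cV[C]_n) : 'cV[C]_(m * n) :=
  \col_k (x (mxtens_unindex k).1 0 * y (mxtens_unindex k).2 0).

Lemma col_tens m k1 n k2 (L : 'M[C]_(m, k1)) (L' : 'M[C]_(n, k2)) j :
  col j (L *t L') = vt (col (mxtens_unindex j).1 L) (col (mxtens_unindex j).2 L').
Proof. by apply/matrixP => i i0; rewrite !mxE. Qed.

Lemma proj_tens m n (x : 'cV[C]_m) (y : 'cV[C]_n) :
  proj (vt x y) = proj x *t proj y.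
Proof.
apply/matrixP => i j; rewrite proj_E !mxE !big_ord1 !mxE rmorphM.
by rewrite mulrACA.
Qed.

Lemma vtZ m n (a : C) (x : 'cV[C]_m) (y : 'cV[C]_n) : a *: vt x y = vt (a *: x) y.
Proof. by apply/matrixP => i j; rewrite !mxE mulrA. Qed.

Lemma Eg2_pure_ge0 (h : dfun R) m n (psi : 'cV[C]_(m * n)) : 0 <= Eg2_pure h psi.
Proof.
rewrite /Eg2_pure; case: ifP => // /andP[a0 _].
by rewrite le_max (ltW a0).
Qed.

Unset Implicit Arguments.
Section H3.
Variable h : dfun R.
Hypothesis Hred : reduced_function h.

Lemma Eg2_pure_prod m n (x : 'cV[C]_m) (y : 'cV[C]_n) :
  unitvec (vt x y) -> Eg2_pure h (vt x y) = 0.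
Proof.
move/unitvec_tr; rewrite proj_tens tens_tr => H.
have tge : 0 <= \tr (proj y) by apply: trG_ge0.
set t := complex.Re (\tr (proj y)).
have et : \tr (proj y) = t%:C by apply: real_of_ge0.
have t0 : 0 <= t by rewrite -lecR -et.
pose x' := (Num.sqrt t)%:C *: x.
have E : ptr2 (proj (vt x y)) = G x'.
  rewrite proj_tens ptr2_tens /x' G_scaleR -expr2 sqr_sqrtr // -et.
  by [].
have Hx' : \tr (G x') = 1.
  by rewrite /x' G_scaleR -expr2 sqr_sqrtr // mxtraceZ -et mulrC.
rewrite /Eg2_pure E.
have -> : h m (G x') = 0 by apply/(h_pure h Hred _ _ (density_G Hx')); apply: pure_of_tr.
by rewrite ltxx.
Qed.

Lemma Eg2_prod m k1 n k2 (L : 'M[C]_(m, k1)) (L' : 'M[C]_(n, k2)) :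
  \tr (G (L *t L')) = 1 -> Eg2 h (G (L *t L')) = 0.
Proof.
move=> Htr; set P := L *t L'.
pose v j := col j P.
pose t j := \tr (proj (v j)).
have tge j : 0 <= t j by apply: trG_ge0.
have tsum : \sum_j t j = 1 by rewrite -Htr G_sum_col raddf_sum.
have [js Hjs] : exists j, t j != 0.
  case: (pselect (exists j, t j != 0)) => // H.
  have : \sum_j t j = 0.
    by apply: big1 => j _; apply/eqP; apply/negPn/negP => Hn; apply: H; exists j.
  by rewrite tsum => /eqP; rewrite oner_eq0.
pose f j := if t j == 0 then js else j.
have tf j : t (f j) != 0 by rewrite /f; case: ifP => [_ | /negbT].
pose p j := complex.Re (t j).
have ep j : t j = (p j)%:C by apply: real_of_ge0.
pose psi j := ((Num.sqrt (p (f j)))^-1)%:C *: v (f j).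
have pf0 j : 0 < p (f j) by rewrite -ltcR -ep lt_def tf tge.
have Gpsi j : proj (psi j) = ((p (f j))^-1)%:C *: proj (v (f j)).
  by rewrite /psi /proj -/(G _) G_scaleR -invfM -expr2 sqr_sqrtr // ltW.
have Upsi j : unitvec (psi j).
  by apply/unitvec_tr; rewrite Gpsi mxtraceZ -/(t _) ep -rmorphM mulVf ?gt_eqF.
rewrite /Eg2; set S := (X in inf X).
have lb : lbound S 0.
  move=> s [k [p' [psi' [Hp [_ [_ ->]]]]]]; apply: sumr_ge0 => j _.
  by apply: mulr_ge0 => //; apply: Eg2_pure_ge0.
have S0 : S 0.
  exists (k1 * k2)%N, p, psi; split; last split; last split.
  - by move=> j; rewrite -lecR -ep.
  - exact: Upsi.
  - rewrite G_sum_col; apply: eq_bigr => j _; rewrite Gpsi scalerA.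
    case: (eqVneq (t j) 0) => Ht.
      have v0 : v j = 0 by apply: trG_eq0.
      have pj : p j = 0 by rewrite /p Ht.
      by rewrite /f Ht eqxx /v /= -/(v j) v0 /proj mul0mx pj mul0r scale0r.
    have pj0 : 0 < p j by have := pf0 j; rewrite /f (negbTE Ht).
    by rewrite /f (negbTE Ht) -rmorphM mulfV ?gt_eqF ?scale1r.
  - symmetry; apply: big1 => j _; have := Upsi j; rewrite /psi /v /P col_tens vtZ => U.
    by rewrite Eg2_pure_prod // mulr0.
apply/eqP; rewrite eq_le; apply/andP; split.
  exact: (ge_inf (ex_intro _ 0 lb) S0).
exact: (lb_le_inf (ex_intro _ 0 S0) lb).
Qed.

End H3.
Set Implicit Arguments.

Section Eta.
Variables dA dB dC : nat.
Variable eta : 'cV[C]_(dA * dB * dC).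
Variable K : 'M[C]_(dB, dA * dC).
Hypothesis HK : forall a b c, eta (idx3 a b c) 0 = K b (mxtens_index (a, c)).

Lemma cutB_mat : matv (cut_B_AC eta) = K.
Proof.
apply/matrixP => b k; case: (mxtens_indexP k) => a c.
by rewrite !mxE !mxtens_indexK /= HK.
Qed.

Lemma rhoB_K : rhoB eta = G K.
Proof. by rewrite /rhoB ptr2_proj cutB_mat. Qed.

Lemma rhoAC_K : rhoAC eta = G K^T.
Proof. by rewrite /rhoAC ptr1_proj cutB_mat. Qed.

Lemma rhoA_K : rhoA eta = ptr2 (G K^T).
Proof.
rewrite /rhoA ptr2_proj; apply/matrixP => a a'; rewrite G_E mxE sum_tens exchange_big.
apply: eq_bigr => c _; rewrite G_E; apply: eq_bigr => b _.
by rewrite !mxE !mxtens_indexK /= !HK.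
Qed.

Lemma rhoC_K : rhoC eta = ptr1 (G K^T).
Proof.
rewrite /rhoC ptr2_proj; apply/matrixP => c c'; rewrite G_E mxE sum_tens.
apply: eq_bigr => a _; rewrite G_E; apply: eq_bigr => b _.
by rewrite !mxE !mxtens_indexK /= !HK.
Qed.

End Eta.

Lemma sepA dA dB dC (eta : 'cV[C]_(dA * dB * dC)) (x : 'cV[C]_dA) (F : 'I_dB -> 'I_dC -> C) :
  (forall a b c, eta (idx3 a b c) 0 = x a 0 * F b c) ->
  exists (x : 'cV[C]_dA) (y : 'cV[C]_(dB * dC)), cut_A_BC eta = x *t y.
Proof.
move=> H; exists x, (\col_k F (mxtens_unindex k).1 (mxtens_unindex k).2).
apply/matrixP => k j; case: (mxtens_indexP k) => a bc; case: (mxtens_indexP bc) => b c.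
rewrite !mxE !mxtens_indexK /= H; f_equal; f_equal; apply: val_inj; rewrite /= divn1; by case: j => -[].
Qed.

Lemma sepC dA dB dC (eta : 'cV[C]_(dA * dB * dC)) (w : 'cV[C]_dC) (F : 'I_dA -> 'I_dB -> C) :
  (forall a b c, eta (idx3 a b c) 0 = F a b * w c 0) ->
  exists (x : 'cV[C]_dC) (y : 'cV[C]_(dA * dB)), cut_C_AB eta = x *t y.
Proof.
move=> H; exists w, (\col_k F (mxtens_unindex k).1 (mxtens_unindex k).2).
apply/matrixP => k j; case: (mxtens_indexP k) => c ab; case: (mxtens_indexP ab) => a b.
by rewrite !mxE !mxtens_indexK /= H [X in _ = w c X * _]ord1 mulrC.
Qed.


Lemma G_mul m n p (X : 'M[C]_(m, n)) (Y : 'M[C]_(n, p)) :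
  G (X *m Y) = X *m G Y *m adjmx X.
Proof. by rewrite /G adjmx_mul !mulmxA. Qed.

Lemma trmx_tens' m n p q (A : 'M[C]_(m, n)) (B : 'M[C]_(p, q)) :
  (A *t B)^T = A^T *t B^T.
Proof. by apply/matrixP => i j; rewrite !mxE. Qed.

Lemma tr_mat_e m n (e : 'cV[C]_(m * n)) : unitvec e -> \tr (G (matv e)) = 1.
Proof. by rewrite tr_matv => /unitvec_tr. Qed.

End Q.

Theorem proposition6 (R : realType) (h : dfun R) :
  reduced_function h -> strictly_concave_on_states h -> tensor_monotone h ->
  forall (dA dB dC : nat) (eta : 'cV[R[i]]_(dA * dB * dC)),
    eta_form eta -> genuinely_entangled eta ->
    [/\ Eg3_pure h eta = Eg2_pure h (cut_A_BC eta) -> Eg2 h (rhoBC eta) = 0,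
        Eg3_pure h eta = Eg2_pure h (cut_B_AC eta) -> Eg2 h (rhoAC eta) = 0
      & Eg3_pure h eta = Eg2_pure h (cut_C_AB eta) -> Eg2 h (rhoAB eta) = 0].
Proof.
move=> Hred Hsc Htm dA dB dC eta [dB1 [dB2 [e1 [e2 [V [He1 He2 HV Heta]]]]]] [Hu Hns].
pose M1 := matv e1. pose M2 := matv e2.
pose K := V *m (M1^T *t M2).
have K_E a b c : K b (mxtens_index (a, c)) =
    \sum_b1 \sum_b2 V b (mxtens_index (b1, b2)) * (M1 a b1 * M2 b2 c).
  rewrite mxE sum_tens; apply: eq_bigr => b1 _; apply: eq_bigr => b2 _.
  by rewrite tensmxE !mxE.
have HK a b c : eta (idx3 a b c) 0 = K b (mxtens_index (a, c)).
  rewrite Heta K_E; apply: eq_bigr => b1 _; apply: eq_bigr => b2 _.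
  by rewrite !mxE mulrA.
have tM1 : \tr (G M1) = 1 by apply: tr_mat_e.
have tM2 : \tr (G M2) = 1 by apply: tr_mat_e.
have tM1' : \tr (G M1^T) = 1 by rewrite trG_tr.
have tM2' : \tr (G M2^T) = 1 by rewrite trG_tr.
have GVT : G V^T = 1%:M.
  have : (adjmx V *m V)^T = 1%:M by rewrite HV tr_scalar_mx.
  by rewrite trmx_mul /G adjmx_tr /adjmx trmxK.
have GKT : G K^T = G M1 *t G M2^T.
  by rewrite /K trmx_mul trmx_tens' trmxK G_mul GVT mulmx1 -G_tens.
have GK : G K = V *m (G M1^T *t G M2) *m adjmx V by rewrite /K G_mul G_tens.
have rA : rhoA eta = G M1.
  by rewrite (rhoA_K HK) GKT ptr2_tens tM2' scale1r.
have rC : rhoC eta = G M2^T.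
  by rewrite (rhoC_K HK) GKT ptr1_tens tM1 scale1r.
have rAC : rhoAC eta = G (M1 *t M2^T) by rewrite (rhoAC_K HK) GKT G_tens.
have DZ : density (G M1^T *t G M2).
  by rewrite -G_tens; apply: density_G; rewrite G_tens tens_tr tM1' tM2 mulr1.
have tK : \tr (G K) = 1.
  by rewrite GK mxtrace_mulC mulmxA HV mul1mx -G_tens; rewrite G_tens tens_tr tM1' tM2 mulr1.
have DB : density (V *m (G M1^T *t G M2) *m adjmx V) by rewrite -GK; apply: density_G.
have ha : h dA (rhoA eta) = h dB1 (G M1^T) by rewrite rA; apply: hG.
have hc : h dC (rhoC eta) = h dB2 (G M2) by rewrite rC; symmetry; apply: hG.
have hb : h dB (rhoB eta) = h (dB1 * dB2)%N (G M1^T *t G M2).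
  by rewrite (rhoB_K HK) GK; apply: h_iso.
have hbc : h (dB * dC)%N (rhoBC eta) = h dA (rhoA eta).
  have T : \tr (G (matv (cut_A_BC eta))) = 1.
    by rewrite -ptr2_proj -/(rhoA eta) rA tM1.
  have := hG _ h Hred _ _ _ T; rewrite -ptr2_proj -ptr1_proj => E.
  by symmetry; exact: E.
have hab : h (dA * dB)%N (rhoAB eta) = h dC (rhoC eta).
  have T : \tr (G (matv (cut_C_AB eta))) = 1.
    by rewrite -ptr2_proj -/(rhoC eta) rC tM2'.
  have := hG _ h Hred _ _ _ T; rewrite -ptr2_proj -ptr1_proj => E.
  by symmetry; exact: E.
have np1 : ~ pure (G M1^T).
  move=> [u [Uu Pu]]; apply: Hns; left.
  have P := G_pure_prod Uu Pu.
  pose x : 'cV[R[i]]_dA := (adjmx u *m M1^T)^T.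
  apply: (@sepA _ _ _ _ _ x (fun b c => \sum_b1 \sum_b2 V b (mxtens_index (b1, b2)) * (u b1 0 * M2 b2 c))).
  move=> a b c; rewrite HK K_E mulr_sumr; apply: eq_bigr => b1 _.
  rewrite mulr_sumr; apply: eq_bigr => b2 _.
  have -> : M1 a b1 = u b1 0 * (adjmx u *m M1^T) 0 a by have := P b1 a; rewrite [M1^T _ _]mxE.
  rewrite [x a 0]mxE; ring.
have np2 : ~ pure (G M2).
  move=> [u [Uu Pu]]; apply: Hns; right; right.
  have P := G_pure_prod Uu Pu.
  pose w : 'cV[R[i]]_dC := (adjmx u *m M2)^T.
  apply: (@sepC _ _ _ _ _ w (fun a b => \sum_b1 \sum_b2 V b (mxtens_index (b1, b2)) * (M1 a b1 * u b2 0))).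
  move=> a b c; rewrite HK K_E mulr_suml; apply: eq_bigr => b1 _.
  rewrite mulr_suml; apply: eq_bigr => b2 _.
  rewrite P [w c 0]mxE; ring.
have hpos n (X : 'M[R[i]]_n) : density X -> ~ pure X -> 0 < h n X.
  move=> D np; rewrite lt_def (h_ge0 _ h Hred _ _ D) andbT.
  by apply/eqP => /(h_pure _ h Hred _ _ D).
have a0 : 0 < h dA (rhoA eta) by rewrite ha; apply: hpos => //; apply: density_G.
have c0 : 0 < h dC (rhoC eta) by rewrite hc; apply: hpos => //; apply: density_G.
have ba : h dA (rhoA eta) < h dB (rhoB eta).
  by rewrite ha hb; exact: (@strict_right _ h Hsc Htm _ _ _ _ _ _ tM1' tM2 np2).
have cb : h dC (rhoC eta) < h dB (rhoB eta).
  by rewrite hc hb; exact: (@strict_left _ h Hsc Htm _ _ _ _ _ _ tM1' tM2 np1).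
have E3 : Eg3_pure h eta = h dB (rhoB eta).
  rewrite /Eg3_pure a0 (lt_trans a0 ba) c0 /=.
  have -> : Num.max (h dB (rhoB eta)) (h dC (rhoC eta)) = h dB (rhoB eta).
    by apply/max_idPl; exact: ltW cb.
  by apply/max_idPr; exact: ltW ba.
have E2A : Eg2_pure h (cut_A_BC eta) = h dA (rhoA eta).
  rewrite /Eg2_pure.
  change (ptr2 (proj (cut_A_BC eta))) with (rhoA eta).
  change (ptr1 (proj (cut_A_BC eta))) with (rhoBC eta).
  by rewrite hbc a0 /= maxxx.
have E2C : Eg2_pure h (cut_C_AB eta) = h dC (rhoC eta).
  rewrite /Eg2_pure.
  change (ptr2 (proj (cut_C_AB eta))) with (rhoC eta).
  change (ptr1 (proj (cut_C_AB eta))) with (rhoAB eta).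
  by rewrite hab c0 /= maxxx.
split.
- by rewrite E3 E2A => /eqP; rewrite gt_eqF.
- move=> _; rewrite rAC; apply: Eg2_prod => //.
  by rewrite G_tens tens_tr tM1 tM2' mulr1.
- by rewrite E3 E2C => /eqP; rewrite gt_eqF.
Qed.
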